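(* Let $n \geq 1$, let $S^{n-1}$ be the topological $(n-1)$-sphere with a base point $\ast$, regarded as a pseudotopological space, and let $[0,1]$ be the topological interval. Let $\Sigma S^{n-1}$ be the pseudotopological based suspension, i.e. the quotient of $S^{n-1}\times[0,1]$ in $\mathbf{PsTop}$ by the relation $(x,k) \sim (x',k) \sim (\ast, t)$ for all $x,x' \in S^{n-1}$, $k \in \{0,1\}$, $t\in[0,1]$. Then the quotient pseudotopology on $\Sigma S^{n-1}$ coincides with the pseudotopology induced by the quotient topology, and $\Sigma S^{n-1} \cong (S^n, \tau)$, where $(S^n,\tau)$ is the topological $n$-sphere regarded as a pseudotopological space.
   Context: A convergence space is a set $X$ with a relation between filters on $X$ and points (written $\lambda\to x$) such that $\lambda\to x$ and $\lambda\subseteq\lambda'$ imply $\lambda'\to x$, and the principal ultrafilter $\dot x\to x$. It is pseudotopological iff $\lambda\to x$ holds exactly when every ultrafilter containing $\lambda$ converges to $x$. Continuous maps: $\lambda\to x$ implies $f(\lambda)\to f(x)$, where $f(\lambda)$ is generated by images. $\mathbf{PsTop}$ is the category of pseudotopological spaces and continuous maps. A topological space is regarded as a pseudotopological space by $\lambda\to x$ iff $\lambda$ contains the neighbourhood filter of $x$. Products carry the initial structure with respect to projections; the quotient by a surjection $q$ in $\mathbf{PsTop}$ carries the final pseudotopology, i.e. the finest pseudotopology making $q$ continuous. *)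

(* Defs.v *)
From mathcomp Require Import all_boot all_order all_algebra.
From mathcomp Require Import classical_sets reals.
Set Implicit Arguments. Unset Strict Implicit. Unset Printing Implicit Defensive.
Import Order.TTheory GRing.Theory Num.Theory.
Local Open Scope classical_set_scope.
Local Open Scope ring_scope.

Definition is_filter {X : Type} (F : set (set X)) : Prop :=
  F setT /\ ~ F set0 /\
  (forall A B, F A -> F B -> F (A `&` B)) /\
  (forall A B, A `<=` B -> F A -> F B).

Definition is_ultra {X : Type} (F : set (set X)) : Prop :=
  is_filter F /\ forall G, is_filter G -> F `<=` G -> G = F.

Definition principal {X : Type} (x : X) : set (set X) := [set A | A x].

Definition fimage {X Y : Type} (f : X -> Y) (F : set (set X)) : set (set Y) :=
  [set B | exists2 A, F A & f @` A `<=` B].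

Definition convergence (X : Type) := set (set X) -> X -> Prop.

Definition is_convergence {X : Type} (c : convergence X) : Prop :=
  (forall F G x, is_filter F -> is_filter G -> F `<=` G -> c F x -> c G x) /\
  (forall x, c (principal x) x).

Definition is_pseudotop {X : Type} (c : convergence X) : Prop :=
  is_convergence c /\
  forall F x, is_filter F ->
    (c F x <-> forall U, is_ultra U -> F `<=` U -> c U x).

Definition conv_continuous {X Y : Type} (cX : convergence X) (cY : convergence Y)
  (f : X -> Y) : Prop :=
  forall F x, is_filter F -> cX F x -> cY (fimage f F) (f x).

Definition conv_homeomorphic {X Y : Type} (cX : convergence X) (cY : convergence Y)
  : Prop :=
  exists (f : X -> Y) (g : Y -> X),
    cancel f g /\ cancel g f /\ conv_continuous cX cY f /\ conv_continuous cY cX g.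

(** a topology (given by its open sets) regarded as a pseudotopology:
    F -> x iff F contains the neighbourhood filter of x *)
Definition top_conv {X : Type} (op : set (set X)) : convergence X :=
  fun F x => forall U, op U -> U x -> F U.

(** product of convergence spaces: initial structure w.r.t. the projections *)
Definition prod_conv {X Y : Type} (cX : convergence X) (cY : convergence Y)
  : convergence (X * Y) :=
  fun F p => cX (fimage fst F) p.1 /\ cY (fimage snd F) p.2.

(** final pseudotopology of q : the finest pseudotopology making q continuous *)
Definition final_pstop {X Q : Type} (cX : convergence X) (q : X -> Q) : convergence Q :=
  fun F y => forall c : convergence Q, is_pseudotop c -> conv_continuous cX c q -> c F y.

Definition metric_open {R : realType} {X : Type} (d : X -> X -> R) : set (set X) := fun U =>
  forall x, U x -> exists2 e : R, 0 < e & forall y, d x y < e -> U y.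

Definition prod_open {X Y : Type} (oX : set (set X)) (oY : set (set Y))
  : set (set (X * Y)) := fun W =>
  forall p, W p -> exists U, exists V,
    [/\ oX U, oY V, U p.1, V p.2 & U `*` V `<=` W].

Definition quot_open {X Q : Type} (oX : set (set X)) (q : X -> Q) : set (set Q) := fun U =>
  oX (q @^-1` U).

Definition sphere (R : realType) (m : nat) :=
  {x : 'I_m.+1 -> R | \sum_(i < m.+1) x i ^+ 2 = 1}.

Definition sph_dist (R : realType) (m : nat) (x y : sphere R m) : R :=
  Num.sqrt (\sum_(i < m.+1) (sval x i - sval y i) ^+ 2).

Definition sphere_open (R : realType) (m : nat) : set (set (sphere R m)) :=
  metric_open (@sph_dist R m).

Arguments sphere_open : clear implicits.

Definition unit_interval (R : realType) := {t : R | 0 <= t <= 1}.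

Definition interval_open (R : realType) : set (set (unit_interval R)) :=
  metric_open (fun s t : unit_interval R => `|sval s - sval t|).

Arguments interval_open : clear implicits.

Definition cyl_conv (R : realType) (m : nat) : convergence (sphere R m * unit_interval R) :=
  prod_conv (top_conv (sphere_open R m)) (top_conv (interval_open R)).

Arguments cyl_conv : clear implicits.

Definition cyl_open (R : realType) (m : nat) : set (set (sphere R m * unit_interval R)) :=
  prod_open (sphere_open R m) (interval_open R).

Arguments cyl_open : clear implicits.

(** the based-suspension relation: (x,0) ~ (x',0) ~ (x'',1) ~ (pt,t),
    i.e. S^m x {0,1} u {pt} x [0,1] is collapsed to a point *)
Definition susp_collapsed (R : realType) (m : nat) (pt : sphere R m)
  (a : sphere R m * unit_interval R) : Prop :=
  sval a.2 = 0 \/ sval a.2 = 1 \/ a.1 = pt.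

Definition susp_rel (R : realType) (m : nat) (pt : sphere R m)
  (a b : sphere R m * unit_interval R) : Prop :=
  a = b \/ (susp_collapsed pt a /\ susp_collapsed pt b).

(* Main.v *)
Require Import Defs.
From HB Require Import structures.
From mathcomp Require Import all_boot all_order all_algebra.
From mathcomp Require Import classical_sets reals.
From mathcomp Require Import boolp functions filter topology normedtype.
From mathcomp Require Import ring lra.
Set Implicit Arguments. Unset Strict Implicit. Unset Printing Implicit Defensive.
Import Order.TTheory GRing.Theory Num.Theory.
Import numFieldNormedType.Exports.
Local Open Scope classical_set_scope.
Local Open Scope ring_scope.


Lemma pfilter_of {X : Type} (F : set (set X)) : is_filter F -> ProperFilter F.
Proof.
move=> [FT [F0 [FI FS]]]; constructor; first exact: F0.
by constructor => //; move=> A B; apply: FI.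
Qed.

Lemma filter_of {X : Type} (F : set (set X)) : ProperFilter F -> is_filter F.
Proof.
move=> PF; split; first exact: filterT.
split; first exact: filter_not_empty.
split; first by move=> A B; apply: filterI.
by move=> A B; apply: filterS.
Qed.

Lemma ultra_of {X : Type} (U : set (set X)) : UltraFilter U -> is_ultra U.
Proof.
move=> UF; split; first by apply: filter_of; apply: ultra_proper.
by move=> G /pfilter_of GF; apply: max_filter.
Qed.

Lemma uf_of {X : Type} (U : set (set X)) : is_ultra U -> UltraFilter U.
Proof.
move=> [UF Umax]; constructor; first exact: pfilter_of.
by move=> G /filter_of GF; apply: Umax.
Qed.

Lemma ultra_ex {X : Type} (F : set (set X)) : is_filter F ->
  exists U, is_ultra U /\ F `<=` U.
Proof.
move=> /pfilter_of PF; have [G [GU FG]] := ultraFilterLemma PF.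
by exists G; split => //; apply: ultra_of.
Qed.

Lemma ultra_dec {X : Type} (U : set (set X)) A : is_ultra U -> U A \/ U (~` A).
Proof. by move=> /uf_of UF; apply: in_ultra_setVsetC. Qed.

Lemma ultra_filter {X : Type} (U : set (set X)) : is_ultra U -> is_filter U.
Proof. by case. Qed.

Lemma filter_ne {X : Type} (F : set (set X)) A : is_filter F -> F A -> exists x, A x.
Proof.
move=> [_ [F0 _]] FA; apply: contrapT => nA; apply: F0.
by rewrite (_ : set0 = A) //; apply/seteqP; split => x //= Ax; apply: nA; exists x.
Qed.

Lemma filterI' {X : Type} (F : set (set X)) A B : is_filter F -> F A -> F B -> F (A `&` B).
Proof. by move=> [_ [_ [FI _]]]; apply: FI. Qed.

Lemma filterS' {X : Type} (F : set (set X)) A B : is_filter F -> A `<=` B -> F A -> F B.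
Proof. by move=> [_ [_ [_ FS]]]; apply: FS. Qed.

Lemma filterT' {X : Type} (F : set (set X)) : is_filter F -> F setT.
Proof. by case. Qed.

Lemma fimage_filter {X Y : Type} (f : X -> Y) F : is_filter F -> is_filter (fimage f F).
Proof.
move=> FF; split.
  by exists setT => //; apply: filterT'.
split.
  move=> [A FA sA]; have [x Ax] := filter_ne FF FA.
  by apply: (sA (f x)); exists x.
split.
  move=> A B [A' FA' sA] [B' FB' sB]; exists (A' `&` B'); first exact: filterI'.
  by move=> _ [x [? ?] <-]; split; [apply: sA|apply: sB]; exists x.
by move=> A B AB [A' FA' sA]; exists A' => //; apply: subset_trans AB.
Qed.

Lemma fimage_sub {X Y : Type} (f : X -> Y) F A : is_filter F -> F (f @^-1` A) -> fimage f F A.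
Proof. by move=> _ FA; exists (f @^-1` A) => // _ [x ? <-]. Qed.

Lemma top_pseudotop {X : Type} (op : set (set X)) : is_pseudotop (top_conv op).
Proof.
split.
  split; first by move=> F G x _ _ FG h U oU Ux; apply: FG; apply: h.
  by move=> x U _ Ux.
move=> F x FF; split.
  by move=> h U _ FU V oV Vx; apply: FU; apply: h.
move=> h O oO Ox; apply: contrapT => nFO.
pose G := [set A | exists2 B, F B & (B `&` ~` O) `<=` A].
have GF : is_filter G.
  split; first by exists setT => //; apply: filterT'.
  split.
    move=> [B FB sB]; apply: nFO; apply: filterS' FB => // y By.
    apply: contrapT => nO; exact: (sB y).
  split.
    move=> A1 A2 [B1 FB1 s1] [B2 FB2 s2]; exists (B1 `&` B2); first exact: filterI'.
    by move=> y [[? ?] nO]; split; [apply: s1|apply: s2].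
  by move=> A1 A2 s12 [B FB sB]; exists B => //; apply: subset_trans s12.
have [U [UU GU]] := ultra_ex GF.
have FU : F `<=` U by move=> A FA; apply: GU; exists A => // y [].
have UO := h U UU FU O oO Ox.
have UnO : U (~` O) by apply: GU; exists setT; [apply: filterT'|move=> y []].
have [y [] //] := filter_ne (ultra_filter UU) (filterI' (ultra_filter UU) UO UnO).
Qed.

Lemma lift_ultra {X Y : Type} (q : X -> Y) (q_surj : forall y, exists a, q a = y)
  (U : set (set Y)) : is_ultra U -> exists W, is_ultra W /\ fimage q W = U.
Proof.
move=> UU; have UF := ultra_filter UU.
pose G := [set A | exists2 B, U B & q @^-1` B `<=` A].
have GF : is_filter G.
  split; first by exists setT => //; apply: filterT'.
  split.
    move=> [B UB sB]; have [y By] := filter_ne UF UB.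
    by have [a qa] := q_surj y; apply: (sB a); rewrite /= qa.
  split.
    move=> A1 A2 [B1 FB1 s1] [B2 FB2 s2]; exists (B1 `&` B2); first exact: filterI'.
    by move=> y [? ?]; split; [apply: s1|apply: s2].
  by move=> A1 A2 s12 [B FB sB]; exists B => //; apply: subset_trans s12.
have [W [WU GW]] := ultra_ex GF.
exists W; split => //.
apply: (UU.2); first exact: fimage_filter (ultra_filter WU).
by move=> B UB; apply: fimage_sub; first exact: ultra_filter WU; apply: GW; exists B.
Qed.

Lemma prod_to_top {X Y : Type} (oX : set (set X)) (oY : set (set Y)) F p :
  is_filter F -> prod_conv (top_conv oX) (top_conv oY) F p ->
  top_conv (prod_open oX oY) F p.
Proof.
move=> FF [h1 h2] W oW Wp.
have [U [V [oU oV Up Vp sW]]] := oW p Wp.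
have [A FA sA] := h1 U oU Up; have [B FB sB] := h2 V oV Vp.
apply: filterS' (filterI' FF FA FB) => // z [Az Bz]; apply: sW; split.
  by apply: sA; exists z.
by apply: sB; exists z.
Qed.

Lemma quot_cont {X Y : Type} (oX : set (set X)) (q : X -> Y) F x :
  top_conv oX F x -> top_conv (quot_open oX q) (fimage q F) (q x).
Proof. by move=> h O oO Ox; exists (q @^-1` O); [apply: h|move=> _ [z ? <-]]. Qed.


Definition clim {R : realType} {T : Type} (F : set (set T)) (h : T -> R) (L : R) :=
  forall e : R, 0 < e -> F [set p | `|h p - L| < e].

Lemma ffilter_all {T : Type} (F : set (set T)) (k : nat) (P : 'I_k -> set T) :
  is_filter F -> (forall i, F (P i)) -> F [set x | forall i, P i x].
Proof.
move=> FF FP.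
suff : forall s : seq 'I_k, F [set x | forall i, i \in s -> P i x].
  by move=> /(_ (enum 'I_k)); apply: filterS' => // x h i; apply: h; rewrite mem_enum.
elim=> [|i s IH]; first by apply: filterS' (filterT' FF).
apply: filterS' (filterI' FF (FP i) IH) => // x [Pi h] j.
by rewrite in_cons => /orP [/eqP->|] //; apply: h.
Qed.

Lemma sq_le_abs {R : realType} (a d : R) : `|a| <= d -> a ^+ 2 <= d ^+ 2.
Proof.
have [a0|a0] := leP 0 a; first by rewrite ger0_norm // => h; nra.
by rewrite ltr0_norm // => h; nra.
Qed.

Lemma abs_lt_sq {R : realType} (a d : R) : 0 <= d -> a ^+ 2 < d ^+ 2 -> `|a| < d.
Proof.
have [a0|a0] := leP 0 a; first by rewrite ger0_norm // => h1 h2; nra.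
by rewrite ltr0_norm // => h1 h2; nra.
Qed.

Lemma clim_unique {R : realType} {T : Type} (F : set (set T)) (h : T -> R) L1 L2 :
  is_filter F -> clim F h L1 -> clim F h L2 -> L1 = L2.
Proof.
move=> FF h1 h2; apply/eqP; apply: contraT => ne.
have e0 : 0 < `|L1 - L2| / 2 by rewrite divr_gt0 // normr_gt0 subr_eq0.
have [p [p1 p2]] := filter_ne FF (filterI' FF (h1 _ e0) (h2 _ e0)).
have := ler_normB (h p - L2) (h p - L1).
have -> : h p - L2 - (h p - L1) = L1 - L2 by ring.
move: p1 p2; rewrite /=; lra.
Qed.

Lemma coord_le_dist {R : realType} (k : nat) (x y : sphere R k) i :
  `|sval x i - sval y i| <= sph_dist x y.
Proof.
rewrite /sph_dist -sqrtr_sqr ler_sqrt; last by apply: sumr_ge0 => j _; apply: sqr_ge0.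
rewrite (bigD1 i) //= lerDl; by apply: sumr_ge0 => j _; apply: sqr_ge0.
Qed.

Lemma sphere_ext {R : realType} (k : nat) (x y : sphere R k) :
  (forall i, sval x i = sval y i) -> x = y.
Proof.
move: x y => [x hx] [y hy] /= h; have e := funext h; subst y.
by congr exist; apply: Prop_irrelevance.
Qed.

Lemma ui_ext {R : realType} (s t : unit_interval R) : sval s = sval t -> s = t.
Proof.
move: s t => [s hs] [t ht] /= e; subst t.
by congr exist; apply: Prop_irrelevance.
Qed.

Lemma sphere_conv_of {R : realType} (k : nat) (F : set (set (sphere R k))) c :
  is_filter F -> (forall i, clim F (fun x : sphere R k => sval x i) (sval c i)) ->
  top_conv (sphere_open R k) F c.
Proof.
move=> FF h U oU Uc.
have [e e0 sU] := oU c Uc.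
pose N : R := k.+1%:R.
have N0 : 0 <= N by rewrite /N ler0n.
have d0 : 0 < e / (N + 1) by rewrite divr_gt0 // ltr_wpDl.
have := ffilter_all FF (fun i => h i _ d0).
apply: filterS' => // x hx; apply: sU.
have hs : \sum_(i < k.+1) (sval c i - sval x i) ^+ 2 <= (e / (N + 1)) ^+ 2 *+ k.+1.
  rewrite -[k.+1 in X in _ <= X]card_ord -sumr_const; apply: ler_sum => i _; apply: sq_le_abs.
  by rewrite distrC; apply: ltW; apply: hx.
rewrite /sph_dist -[e](@ger0_norm _ e) ?ltW // -sqrtr_sqr ltr_sqrt ?exprn_gt0 //.
apply: (le_lt_trans hs); rewrite -mulr_natr -/N.
set z := (N + 1)^-1.
have z0 : 0 < z by rewrite invr_gt0 ltr_wpDl.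
have zN : z * (N + 1) = 1 by rewrite mulVf // gt_eqF // ltr_wpDl.
have -> : (e / (N + 1)) ^+ 2 * N = e ^+ 2 * (z * (z * N)) by rewrite /z; ring.
have -> : z * N = 1 - z by rewrite mulrDr mulr1 in zN; lra.
have e2 : 0 < e ^+ 2 by rewrite exprn_gt0.
have : z * (1 - z) < 1 by nra.
nra.
Qed.

Lemma sphere_conv_to {R : realType} (k : nat) (F : set (set (sphere R k))) c i :
  top_conv (sphere_open R k) F c -> clim F (fun x : sphere R k => sval x i) (sval c i).
Proof.
move=> h e e0; apply: h; last by rewrite /= subrr normr0.
move=> z /= hz; exists (e - `|sval z i - sval c i|); first by rewrite subr_gt0.
move=> y dy /=.
have := coord_le_dist z y i; have := ler_normD (sval y i - sval z i) (sval z i - sval c i).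
have -> : sval y i - sval z i + (sval z i - sval c i) = sval y i - sval c i by ring.
have := distrC (sval y i) (sval z i); move: dy; rewrite /=; lra.
Qed.

Lemma interval_conv_of {R : realType} (F : set (set (unit_interval R))) t :
  is_filter F -> clim F (fun s : unit_interval R => sval s) (sval t) ->
  top_conv (Defs.interval_open R) F t.
Proof.
move=> FF h U oU Ut; have [e e0 sU] := oU t Ut.
by apply: filterS' (h e e0) => // s hs; apply: sU; rewrite distrC.
Qed.

Lemma interval_conv_to {R : realType} (F : set (set (unit_interval R))) t :
  top_conv (Defs.interval_open R) F t -> clim F (fun s : unit_interval R => sval s) (sval t).
Proof.
move=> h e e0; apply: h; last by rewrite /= subrr normr0.
move=> z /= hz; exists (e - `|sval z - sval t|); first by rewrite subr_gt0.
move=> y dy /=.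
have := ler_normD (sval y - sval z) (sval z - sval t).
have -> : sval y - sval z + (sval z - sval t) = sval y - sval t by ring.
rewrite distrC in dy; lra.
Qed.

Lemma fimage_pre {X Y : Type} (f : X -> Y) F A :
  is_filter F -> (fimage f F A <-> F (f @^-1` A)).
Proof.
move=> FF; split; last exact: fimage_sub.
by move=> [B FB sB]; apply: filterS' FB => // x Bx; apply: sB; exists x.
Qed.

Lemma cyl_conv_of {R : realType} (m : nat) (W : set (set (sphere R m * unit_interval R))) p :
  is_filter W ->
  (forall i, clim W (fun z => sval z.1 i) (sval p.1 i)) ->
  clim W (fun z => sval z.2) (sval p.2) -> cyl_conv R m W p.
Proof.
move=> WF h1 h2; split.
  apply: sphere_conv_of; first exact: fimage_filter.
  by move=> i e e0; apply/fimage_pre => //; apply: h1.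
apply: interval_conv_of; first exact: fimage_filter.
by move=> e e0; apply/fimage_pre => //; apply: h2.
Qed.

Lemma cyl_conv_to {R : realType} (m : nat) (W : set (set (sphere R m * unit_interval R))) p :
  is_filter W -> cyl_conv R m W p ->
  (forall i, clim W (fun z => sval z.1 i) (sval p.1 i)) /\
  clim W (fun z => sval z.2) (sval p.2).
Proof.
move=> WF [h1 h2]; split.
  by move=> i e e0; have := sphere_conv_to i h1 e0; move/(fimage_pre _ _ WF).
by move=> e e0; have := interval_conv_to h2 e0; move/(fimage_pre _ _ WF).
Qed.

Lemma sphere_hausdorff {R : realType} (k : nat) (G : set (set (sphere R k))) w1 w2 :
  is_filter G -> top_conv (sphere_open R k) G w1 -> top_conv (sphere_open R k) G w2 ->
  w1 = w2.
Proof.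
move=> GF h1 h2; apply: sphere_ext => i.
exact: (clim_unique GF (sphere_conv_to i h1) (sphere_conv_to i h2)).
Qed.


Definition dot {R : realType} {k : nat} (u v : 'I_k -> R) := \sum_(i < k) u i * v i.

Lemma dotC {R : realType} {k : nat} (u v : 'I_k -> R) : dot u v = dot v u.
Proof. by apply: eq_bigr => i _; rewrite mulrC. Qed.

Lemma sum_sqB {R : realType} {k : nat} (u v : 'I_k -> R) :
  \sum_(i < k) (u i - v i) ^+ 2 = dot u u - 2 * dot u v + dot v v.
Proof.
rewrite (eq_bigr (fun i => (u i * u i - 2 * (u i * v i)) + v i * v i)); last by move=> i _; ring.
by rewrite big_split sumrB -mulr_sumr.
Qed.

Lemma sum_comb_dot {R : realType} {k : nat} (e x : 'I_k -> R) K :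
  \sum_(i < k) (e i + K * (x i - e i)) * e i = dot e e + K * (dot x e - dot e e).
Proof.
rewrite (eq_bigr (fun i => e i * e i + K * (x i * e i - e i * e i))); last by move=> i _; ring.
by rewrite big_split -mulr_sumr sumrB.
Qed.

Lemma sum_comb_sq {R : realType} {k : nat} (e x : 'I_k -> R) K :
  \sum_(i < k) (e i + K * (x i - e i)) ^+ 2 =
  dot e e + 2 * K * (dot x e - dot e e) + K ^+ 2 * \sum_(i < k) (x i - e i) ^+ 2.
Proof.
rewrite (eq_bigr (fun i => (e i * e i + (2 * K) * (x i * e i - e i * e i))
   + K ^+ 2 * (x i - e i) ^+ 2)); last by move=> i _; ring.
by rewrite big_split big_split -!mulr_sumr sumrB.
Qed.

Lemma sq_le_sum {R : realType} {k : nat} (u : 'I_k -> R) i :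
  u i ^+ 2 <= \sum_(j < k) u j ^+ 2.
Proof. by rewrite (bigD1 i) //= lerDl; apply: sumr_ge0 => j _; apply: sqr_ge0. Qed.

Lemma sum_sq_eq0 {R : realType} {k : nat} (u : 'I_k -> R) :
  \sum_(j < k) u j ^+ 2 = 0 -> forall i, u i = 0.
Proof.
move=> h0 i; apply/eqP; rewrite -sqrf_eq0; apply/eqP.
by apply: (psumr_eq0P _ h0) => // j _; apply: sqr_ge0.
Qed.

Definition lft {m : nat} (i : 'I_m.+1) : 'I_m.+2 := widen_ord (leqnSn m.+1) i.

Lemma split_ext {R : Type} {m : nat} (u v : 'I_m.+2 -> R) :
  (forall i, u (lft i) = v (lft i)) -> u ord_max = v ord_max -> forall j, u j = v j.
Proof.
move=> h1 h2 j; have [jm|jm] := ltnP j m.+1.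
  by have -> : j = lft (Ordinal jm) by apply: val_inj.
have jm' : j = ord_max.
  by apply: val_inj => /=; apply/eqP; rewrite eqn_leq jm -ltnS ltn_ord.
by rewrite jm'.
Qed.

Lemma sum_split {R : realType} {m : nat} (u : 'I_m.+2 -> R) :
  \sum_(j < m.+2) u j = \sum_(i < m.+1) u (lft i) + u ord_max.
Proof. by rewrite big_ord_recr. Qed.

Section Alg.
Variables (R : realType) (m : nat) (e : 'I_m.+1 -> R).

Definition aF (x : 'I_m.+1 -> R) : R := 1 - dot x e.
Definition bF (t : R) : R := t * (1 - t).
Definition dF (t : R) : R := 2 * t - 1.
Definition DF x t : R := 2 * bF t ^+ 2 + aF x * dF t ^+ 2.
Definition kF x t : R := 2 * bF t ^+ 2 / DF x t.
Definition lastF x t : R := 2 * aF x * bF t * dF t / DF x t.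
Definition Phi x t (j : 'I_m.+2) : R :=
  if (j < m.+1)%N then e (inord j) + kF x t * (x (inord j) - e (inord j))
  else lastF x t.

Lemma Phi_lft x t i : Phi x t (lft i) = e i + kF x t * (x i - e i).
Proof. by rewrite /Phi /= ltn_ord inord_val. Qed.

Lemma Phi_max x t : Phi x t ord_max = lastF x t.
Proof. by rewrite /Phi /= ltnn. Qed.

Definition Pc (j : 'I_m.+2) : R := if (j < m.+1)%N then e (inord j) else 0.

Lemma Pc_lft i : Pc (lft i) = e i.
Proof. by rewrite /Pc /= ltn_ord inord_val. Qed.

Lemma Pc_max : Pc ord_max = 0.
Proof. by rewrite /Pc /= ltnn. Qed.

Definition alpha (w : 'I_m.+2 -> R) : R := 1 - \sum_(i < m.+1) w (lft i) * e i.

Hypothesis he : dot e e = 1.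

Lemma sumsq_a x : dot x x = 1 -> \sum_(i < m.+1) (x i - e i) ^+ 2 = 2 * aF x.
Proof. by move=> hx; rewrite sum_sqB hx he /aF; ring. Qed.

Lemma aF_ge0 x : dot x x = 1 -> 0 <= aF x.
Proof.
move=> hx; have := sumsq_a hx.
have : 0 <= \sum_(i < m.+1) (x i - e i) ^+ 2 by apply: sumr_ge0 => i _; apply: sqr_ge0.
lra.
Qed.

Lemma coord_le_a x i : dot x x = 1 -> (x i - e i) ^+ 2 <= 2 * aF x.
Proof. by move=> hx; rewrite -sumsq_a //; apply: (sq_le_sum (fun j => x j - e j)). Qed.

Lemma aF_eq0 x : dot x x = 1 -> aF x = 0 -> forall i, x i = e i.
Proof.
move=> hx ha i; have := sumsq_a hx; rewrite ha mulr0 => /sum_sq_eq0 /(_ i).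
by move/eqP; rewrite subr_eq0 => /eqP.
Qed.

Lemma dF_sq t : dF t ^+ 2 = 1 - 4 * bF t.
Proof. by rewrite /dF /bF; ring. Qed.

Lemma bF_ge0 t : 0 <= t <= 1 -> 0 <= bF t.
Proof. by move=> /andP [t0 t1]; rewrite /bF; nra. Qed.

Lemma alg_sph (a b d : R) :
  1 + 2 * (2 * b ^+ 2 / (2 * b ^+ 2 + a * d ^+ 2)) * (1 - a - 1) +
  (2 * b ^+ 2 / (2 * b ^+ 2 + a * d ^+ 2)) ^+ 2 * (2 * a) +
  (2 * a * b * d / (2 * b ^+ 2 + a * d ^+ 2)) ^+ 2 = 1.
Proof.
have [D0|D0] := eqVneq (2 * b ^+ 2 + a * d ^+ 2) 0.
  by rewrite D0 !invr0 !mulr0; ring.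
by field.
Qed.

Lemma Phi_sphere x t : dot x x = 1 ->
  \sum_(j < m.+2) Phi x t j ^+ 2 = 1.
Proof.
move=> hx; rewrite sum_split.
under eq_bigr do rewrite Phi_lft.
rewrite sum_comb_sq sumsq_a // he Phi_max /lastF /kF /DF.
have -> : dot x e = 1 - aF x by rewrite /aF; ring.
exact: alg_sph.
Qed.

Lemma DF_ge0 x t : dot x x = 1 -> 0 <= DF x t.
Proof.
move=> hx; rewrite /DF; have := aF_ge0 hx.
have := sqr_ge0 (bF t); have := sqr_ge0 (dF t); nra.
Qed.

Lemma alg_B1 (a b d y : R) : 0 <= a -> 0 <= y -> y <= 2 * a ->
  (2 * b ^+ 2 / (2 * b ^+ 2 + a * d ^+ 2)) ^+ 2 * y * d ^+ 2 <= b ^+ 2.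
Proof.
move=> a0 y0 ya.
have [D0|D0] := eqVneq (2 * b ^+ 2 + a * d ^+ 2) 0.
  by rewrite D0 invr0 mulr0 expr0n /= !mul0r sqr_ge0.
have Dp : 0 < 2 * b ^+ 2 + a * d ^+ 2.
  rewrite lt_neqAle eq_sym D0 /=; have := sqr_ge0 b; have := sqr_ge0 d; nra.
have -> : (2 * b ^+ 2 / (2 * b ^+ 2 + a * d ^+ 2)) ^+ 2 * y * d ^+ 2 =
  (2 * b ^+ 2) ^+ 2 * (y * d ^+ 2) / (2 * b ^+ 2 + a * d ^+ 2) ^+ 2 by field.
rewrite ler_pdivrMr ?exprn_gt0 //.
have h1 : (2 * b ^+ 2) ^+ 2 * (y * d ^+ 2) <= (2 * b ^+ 2) ^+ 2 * (2 * a * d ^+ 2).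
  apply: ler_wpM2l; first exact: sqr_ge0.
  by apply: ler_wpM2r; [apply: sqr_ge0|].
apply: (le_trans h1); rewrite -subr_ge0.
have -> : b ^+ 2 * (2 * b ^+ 2 + a * d ^+ 2) ^+ 2 - (2 * b ^+ 2) ^+ 2 * (2 * a * d ^+ 2)
   = (b * (2 * b ^+ 2 - a * d ^+ 2)) ^+ 2 by ring.
exact: sqr_ge0.
Qed.

Lemma alg_B2 (a b d : R) : 0 <= a ->
  (2 * a * b * d / (2 * b ^+ 2 + a * d ^+ 2)) ^+ 2 <= a / 2.
Proof.
move=> a0.
have [D0|D0] := eqVneq (2 * b ^+ 2 + a * d ^+ 2) 0.
  by rewrite D0 invr0 mulr0 expr0n /= divr_ge0.
have Dp : 0 < 2 * b ^+ 2 + a * d ^+ 2.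
  rewrite lt_neqAle eq_sym D0 /=; have := sqr_ge0 b; have := sqr_ge0 d; nra.
have -> : (2 * a * b * d / (2 * b ^+ 2 + a * d ^+ 2)) ^+ 2 =
  (2 * a * b * d) ^+ 2 / (2 * b ^+ 2 + a * d ^+ 2) ^+ 2 by field.
rewrite ler_pdivrMr ?exprn_gt0 // -subr_ge0.
have -> : a / 2 * (2 * b ^+ 2 + a * d ^+ 2) ^+ 2 - (2 * a * b * d) ^+ 2 =
  a * (2 * b ^+ 2 - a * d ^+ 2) ^+ 2 / 2 by field.
by rewrite divr_ge0 // mulr_ge0 // sqr_ge0.
Qed.

Lemma boundB1 x t i : dot x x = 1 ->
  (Phi x t (lft i) - e i) ^+ 2 * dF t ^+ 2 <= bF t ^+ 2.
Proof.
move=> hx; rewrite Phi_lft.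
have -> : e i + kF x t * (x i - e i) - e i = kF x t * (x i - e i) by ring.
rewrite exprMn /kF /DF.
apply: alg_B1; [exact: aF_ge0|exact: sqr_ge0|exact: coord_le_a].
Qed.

Lemma boundB2 x t : dot x x = 1 -> Phi x t ord_max ^+ 2 <= aF x / 2.
Proof. by move=> hx; rewrite Phi_max /lastF /DF; apply: alg_B2; apply: aF_ge0. Qed.

Lemma Phi_coll x t : dot x x = 1 -> (t = 0 \/ t = 1 \/ (forall i, x i = e i)) ->
  forall j, Phi x t j = Pc j.
Proof.
move=> hx hc; apply: split_ext => [i|]; rewrite ?Phi_lft ?Pc_lft ?Phi_max ?Pc_max /kF /lastF.
  case: hc => [->|[->|hxe]]; first by rewrite /bF; ring.
    by rewrite /bF; ring.
  by rewrite hxe; ring.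
case: hc => [->|[->|hxe]]; first by rewrite /bF; ring.
  by rewrite /bF; ring.
have -> : aF x = 0.
  rewrite /aF /dot (eq_bigr (fun i => e i * e i)) => [|i _]; last by rewrite hxe.
  by rewrite -/(dot e e) he subrr.
by ring.
Qed.

Lemma alpha_Phi x t : alpha (Phi x t) = kF x t * aF x.
Proof.
rewrite /alpha; under eq_bigr do rewrite Phi_lft.
by rewrite sum_comb_dot he /aF; ring.
Qed.

Lemma alpha_Pc : alpha Pc = 0.
Proof. by rewrite /alpha; under eq_bigr do rewrite Pc_lft; rewrite -/(dot e e) he subrr. Qed.

Lemma bF_gt0 t : 0 < t < 1 -> 0 < bF t.
Proof. by move=> /andP [t0 t1]; rewrite /bF; nra. Qed.

Lemma kF_gt0 x t : dot x x = 1 -> 0 < t < 1 -> 0 < kF x t.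
Proof.
move=> hx ht; have b0 := bF_gt0 ht; have := aF_ge0 hx.
have := sqr_ge0 (dF t); rewrite /kF /DF => h1 h2.
rewrite divr_gt0 //; first by rewrite mulr_gt0 // exprn_gt0.
have : 0 < bF t ^+ 2 by rewrite exprn_gt0.
nra.
Qed.

Lemma lastF_b x t : lastF x t * bF t = kF x t * aF x * dF t.
Proof. by rewrite /lastF /kF; ring. Qed.

Lemma Phi_inj x x' t t' : dot x x = 1 -> dot x' x' = 1 -> 0 < t < 1 -> 0 < t' < 1 ->
  0 < aF x -> 0 < aF x' -> (forall j, Phi x t j = Phi x' t' j) ->
  (forall i, x i = x' i) /\ t = t'.
Proof.
move=> hx hx' ht ht' ha ha' h.
have hal : alpha (Phi x t) = alpha (Phi x' t').
  by rewrite /alpha; congr (_ - _); apply: eq_bigr => i _; rewrite h.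
rewrite !alpha_Phi in hal.
have hL : lastF x t = lastF x' t' by rewrite -!Phi_max h.
have A0 : 0 < kF x t * aF x by rewrite mulr_gt0 // kF_gt0.
have e1 := lastF_b x t; have e2 := lastF_b x' t'.
have hd : kF x t * aF x * (dF t * bF t' - dF t' * bF t) = 0.
  have -> : kF x t * aF x * (dF t * bF t' - dF t' * bF t) =
    (kF x t * aF x * dF t) * bF t' - (kF x t * aF x) * dF t' * bF t by ring.
  by rewrite -e1 hal -e2 hL; ring.
move: hd => /eqP; rewrite mulf_eq0 (negbTE (lt0r_neq0 A0)) /= => /eqP hd.
have htt : t = t'.
  have : (t - t') * (t * t' + (1 - t) * (1 - t')) = dF t * bF t' - dF t' * bF t.
    by rewrite /dF /bF; ring.
  rewrite hd => /eqP; rewrite mulf_eq0 => /orP [|]; first by rewrite subr_eq0 => /eqP.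
  move: ht ht' => /andP [t0 t1] /andP [t0' t1'] /eqP h0; nra.
subst t'; split => //.
have D0 : 0 < DF x t.
  rewrite /DF; have := bF_gt0 ht; have := aF_ge0 hx; have := sqr_ge0 (dF t); nra.
have D0' : 0 < DF x' t.
  rewrite /DF; have := bF_gt0 ht; have := aF_ge0 hx'; have := sqr_ge0 (dF t); nra.
have k1 : kF x t * DF x t = 2 * bF t ^+ 2 by rewrite /kF divfK // lt0r_neq0.
have k2 : kF x' t * DF x' t = 2 * bF t ^+ 2 by rewrite /kF divfK // lt0r_neq0.
have hK : kF x t = kF x' t.
  have b2 : 0 < bF t ^+ 2 by rewrite exprn_gt0 // bF_gt0.
  move: k1 k2; rewrite /DF => k1 k2.
  have : (kF x t - kF x' t) * (2 * bF t ^+ 2) = 0.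
    have -> : (kF x t - kF x' t) * (2 * bF t ^+ 2) =
      kF x t * (2 * bF t ^+ 2 + aF x * dF t ^+ 2) - kF x' t * (2 * bF t ^+ 2 + aF x' * dF t ^+ 2)
      - (kF x t * aF x - kF x' t * aF x') * dF t ^+ 2 by ring.
    by rewrite k1 k2 hal; ring.
  move=> h0; apply/eqP; rewrite -subr_eq0; apply/eqP.
  apply: (mulIf (lt0r_neq0 (mulr_gt0 (ltr0n R 2) b2))).
  by rewrite h0 mul0r.
have K0 := kF_gt0 hx ht.
move=> i; have := h (lft i); rewrite !Phi_lft hK.
by move=> /addrI /(mulfI (lt0r_neq0 (kF_gt0 hx' ht))) /addIr.
Qed.



Lemma Phi_surj (w : 'I_m.+2 -> R) : \sum_(j < m.+2) w j ^+ 2 = 1 -> alpha w != 0 ->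
  exists x t, [/\ dot x x = 1, 0 < t < 1, 0 < aF x & forall j, Phi x t j = w j].
Proof.
move=> hw hal.
pose wy := fun i => w (lft i); pose wl := w ord_max; pose al := alpha w.
have hsum : dot wy wy + wl ^+ 2 = 1.
  rewrite -hw sum_split; congr (_ + _); apply: eq_bigr => i _; by rewrite expr2.
have hwe : dot wy e = 1 - al by rewrite /al /alpha /dot; ring.
have hS : \sum_(i < m.+1) (wy i - e i) ^+ 2 = 2 * al - wl ^+ 2.
  by rewrite sum_sqB hwe he; lra.
have S0 : 0 <= \sum_(i < m.+1) (wy i - e i) ^+ 2 by apply: sumr_ge0 => i _; apply: sqr_ge0.
have al0 : 0 < al.
  rewrite lt_def hal /=; have := sqr_ge0 wl; lra.
have g0 : 0 < 2 * al - wl ^+ 2.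
  rewrite -hS lt_def S0 andbT; apply/eqP => /sum_sq_eq0 h0.
  move: hwe; rewrite /dot (eq_bigr (fun i => e i * e i)) => [|i _]; last first.
    by have := h0 i; move/eqP; rewrite subr_eq0 => /eqP ->.
  rewrite -/(dot e e) he => h1; move: al0; lra.
pose g := 2 * al - wl ^+ 2.
pose c := 2 * al / g.
pose x := fun i => e i + c * (wy i - e i).
have gn : g != 0 by rewrite lt0r_neq0.
have aln : al != 0 by rewrite lt0r_neq0.
have hx : dot x x = 1.
  have -> : dot x x = \sum_(i < m.+1) (e i + c * (wy i - e i)) ^+ 2.
    by apply: eq_bigr => i _; rewrite expr2.
  rewrite sum_comb_sq he hS hwe -/g /c; field; exact: gn.
have ha : aF x = c * al.
  by rewrite /aF /dot -/(\sum_(i < m.+1) x i * e i) sum_comb_dot he hwe; ring.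
pose s := wl / al.
pose r := Num.sqrt (s ^+ 2 + 4).
have r2 : r ^+ 2 = s ^+ 2 + 4 by rewrite sqr_sqrtr // addr_ge0 // sqr_ge0.
have r0 : 0 <= r by apply: sqrtr_ge0.
have rs : s < r by nra.
have rs' : - s < r by nra.
pose u := 2 - s + r.
have u2 : 2 < u by rewrite /u; lra.
pose t := 2 / u.
have un : u != 0 by rewrite lt0r_neq0 //; lra.
have tu : t * u = 2 by rewrite /t divfK.
have t01 : 0 < t < 1.
  apply/andP; split; first by rewrite /t divr_gt0 //; lra.
  by rewrite /t ltr_pdivrMr; lra.
have hsb : dF t = s * bF t.
  have hq : u * u - 2 * (2 - s) * u - 4 * s = 0 by rewrite /u; nra.
  have : (s * bF t - dF t) * u ^+ 2 = u * u - 2 * (2 - s) * u - 4 * s.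
    by rewrite /bF /dF /t; field.
  rewrite hq => /eqP; rewrite mulf_eq0 expf_eq0 (negbTE un) andbF orbF subr_eq0.
  by move/eqP.
have b0 := bF_gt0 t01.
have bn : bF t != 0 by rewrite lt0r_neq0.
have hD : DF x t = bF t ^+ 2 * (4 * al / g).
  rewrite /DF ha hsb /c /s /g; move: (bF t) => B; field.
  by apply/andP; split; [exact: gn|exact: aln].
have hK : kF x t = g / (2 * al).
  rewrite /kF hD /g; field.
  by apply/and3P; split; [exact: aln|exact: gn|exact: bn].
exists x, t; split => //.
  by rewrite ha mulr_gt0 // /c divr_gt0 // mulr_gt0.
apply: split_ext => [i|].
  rewrite Phi_lft hK /x /c /g /wy /=; field.
  by apply/andP; split; [exact: gn|exact: aln].
rewrite Phi_max /lastF hD ha hsb /c /s /g /wl; field.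
by apply/and3P; split; [exact: gn|exact: aln|exact: bn].
Qed.
End Alg.


Lemma clim_cvg {R : realType} {T : Type} (W : set (set T)) (h : T -> R) L :
  is_filter W -> (clim W h L <-> h @ (W : set_system T) --> L).
Proof.
move=> WF; have FW : Filter W by apply: filter_filter; apply: pfilter_of.
rewrite cvgrPdistC_lt; split => hh eps e0; exact: hh.
Qed.

Section Alg2.
Variables (R : realType) (T : Type) (W : set (set T)).
Hypothesis WF : is_filter W.

Let FW : Filter W.
Proof. by apply: filter_filter; apply: pfilter_of. Qed.

Lemma climC (c : R) : clim W (fun _ => c) c.
Proof. by apply/clim_cvg => //; apply: cvg_cst. Qed.

Lemma climD (f g : T -> R) a b : clim W f a -> clim W g b ->
  clim W (fun p => f p + g p) (a + b).
Proof. by move=> /(clim_cvg _ _ WF) h1 /(clim_cvg _ _ WF) h2; apply/clim_cvg => //; apply: cvgD. Qed.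

Lemma climN (f : T -> R) a : clim W f a -> clim W (fun p => - f p) (- a).
Proof. by move=> /(clim_cvg _ _ WF) h1; apply/clim_cvg => //; apply: cvgN. Qed.

Lemma climB (f g : T -> R) a b : clim W f a -> clim W g b ->
  clim W (fun p => f p - g p) (a - b).
Proof. by move=> h1 h2; apply: climD => //; apply: climN. Qed.

Lemma climM (f g : T -> R) a b : clim W f a -> clim W g b ->
  clim W (fun p => f p * g p) (a * b).
Proof. by move=> /(clim_cvg _ _ WF) h1 /(clim_cvg _ _ WF) h2; apply/clim_cvg => //; apply: cvgM. Qed.

Lemma climV (f : T -> R) a : a != 0 -> clim W f a -> clim W (fun p => (f p)^-1) a^-1.
Proof. by move=> a0 /(clim_cvg _ _ WF) h1; apply/clim_cvg => //; apply: cvgV. Qed.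

Lemma climX (f : T -> R) a n : clim W f a -> clim W (fun p => f p ^+ n) (a ^+ n).
Proof.
move=> h; elim: n => [|n IH]; first by rewrite expr0; under eq_fun do rewrite expr0; apply: climC.
rewrite exprS; under eq_fun do rewrite exprS; exact: climM.
Qed.

Lemma climS (I : Type) (r : seq I) (f : I -> T -> R) (a : I -> R) :
  (forall i, clim W (f i) (a i)) ->
  clim W (fun p => \sum_(i <- r) f i p) (\sum_(i <- r) a i).
Proof.
move=> h; elim: r => [|i r IH].
  by rewrite big_nil; under eq_fun do rewrite big_nil; apply: climC.
by rewrite big_cons; under eq_fun do rewrite big_cons; apply: climD.
Qed.
End Alg2.

Section PhiCont.
Variables (R : realType) (m : nat) (e : 'I_m.+1 -> R).
Hypothesis he : dot e e = 1.

Lemma Phi_cont (T : Type) (W : set (set T)) (X : T -> 'I_m.+1 -> R) (Tt : T -> R) x0 t0 :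
  is_filter W -> (forall p, dot (X p) (X p) = 1) -> dot x0 x0 = 1 ->
  (forall i, clim W (fun p => X p i) (x0 i)) -> clim W Tt t0 ->
  forall j, clim W (fun p => Phi e (X p) (Tt p) j) (Phi e x0 t0 j).
Proof.
move=> WF hX hx0 cX cT.
have ca : clim W (fun p => aF e (X p)) (aF e x0).
  rewrite /aF /dot; apply: (climB WF) => //; first exact: (climC WF).
  by apply: (climS WF) => i; apply: (climM WF) => //; apply: (climC WF).
have cb : clim W (fun p => bF (Tt p)) (bF t0).
  by rewrite /bF; apply: (climM WF) => //; apply: (climB WF) => //; apply: (climC WF).
have cd : clim W (fun p => dF (Tt p)) (dF t0).
  by rewrite /dF; apply: (climB WF) => //; [apply: (climM WF) => //; apply: (climC WF)|apply: (climC WF)].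
have cD : clim W (fun p => DF e (X p) (Tt p)) (DF e x0 t0).
  rewrite /DF; apply: (climD WF) => //; apply: (climM WF) => //; try apply: (climC WF) => //;
  by apply: (climX WF).
have [D0|D0] := eqVneq (DF e x0 t0) 0; last first.
  have ck : clim W (fun p => kF e (X p) (Tt p)) (kF e x0 t0).
    rewrite /kF; apply: (climM WF) => //; last by apply: (climV WF).
    by apply: (climM WF) => //; [apply: (climC WF)|apply: (climX WF)].
  move=> j; rewrite /Phi; case: ifP => _.
    apply: (climD WF) => //; first exact: (climC WF).
    by apply: (climM WF) => //; apply: (climB WF) => //; apply: (climC WF).
  rewrite /lastF; apply: (climM WF) => //; last by apply: (climV WF).
  apply: (climM WF) => //; apply: (climM WF) => //; apply: (climM WF) => //; exact: (climC WF).
have a0 := aF_ge0 he hx0.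
have b0 : bF t0 = 0.
  move: D0; rewrite /DF => D0.
  have := sqr_ge0 (dF t0); have := sqr_ge0 (bF t0) => h1 h2.
  have : bF t0 ^+ 2 = 0 by nra.
  by move/eqP; rewrite sqrf_eq0 => /eqP.
have k0 : kF e x0 t0 = 0 by rewrite /kF D0 invr0 mulr0.
have l0 : lastF e x0 t0 = 0 by rewrite /lastF D0 invr0 mulr0.
move=> j eps e0.
have [jm|jm] := ltnP j m.+1.
  have -> : j = lft (Ordinal jm) by apply: val_inj.
  set i := Ordinal jm.
  rewrite Phi_lft k0 mul0r addr0.
  have h8 : 0 < 1 / 8 :> R by rewrite divr_gt0.
  have he2 : 0 < eps / 2 by rewrite divr_gt0.
  apply: filterS' (filterI' WF (cb _ h8) (cb _ he2)) => // p /= [p1 p2].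
  rewrite b0 subr0 in p1 p2.
  have hB := boundB1 he (Tt p) i (hX p).
  have hd := dF_sq (Tt p).
  apply: abs_lt_sq; first exact: ltW.
  have := sq_le_abs (ltW p2); have : bF (Tt p) <= 1 / 8.
    by apply: le_trans (ltW p1); apply: ler_norm.
  set y := (Phi e (X p) (Tt p) (lft i) - e i) ^+ 2.
  have y0 : 0 <= y by apply: sqr_ge0.
  move: hB; rewrite hd -/y => hB hb8 hb2.
  have : y * (1 / 2) <= bF (Tt p) ^+ 2 by nra.
  have : (eps / 2) ^+ 2 < eps ^+ 2.
    rewrite -subr_gt0; have -> : eps ^+ 2 - (eps / 2) ^+ 2 = 3 * (eps / 2) ^+ 2 by field.
    by rewrite mulr_gt0 // exprn_gt0.
  lra.
have jM : j = ord_max by apply: val_inj => /=; apply/eqP; rewrite eqn_leq jm -ltnS ltn_ord.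
rewrite jM Phi_max l0.
have e2 : 0 < eps ^+ 2 by rewrite exprn_gt0.
apply: filterS' (ca _ e2) => // p /= p1.
have hB := boundB2 he (Tt p) (hX p).
have aa : aF e x0 = 0.
  move: D0; rewrite /DF b0 dF_sq b0; lra.
rewrite aa subr0 in p1.
apply: abs_lt_sq; first exact: ltW.
rewrite subr0; have := ler_norm (aF e (X p)); lra.
Qed.
End PhiCont.


Lemma ultra_lim {R : realType} {T : Type} (U : set (set T)) (h : T -> R) (B : R) :
  is_ultra U -> (forall p, `|h p| <= B) -> exists L, clim U h L.
Proof.
move=> UU hB; have UF := ultra_filter UU.
pose E := [set r : R | U [set p | r <= h p]].
have EB : forall r, E r -> r <= B.
  move=> r Er; have [p hp] := filter_ne UF Er.
  by apply: le_trans hp _; apply: le_trans (ler_norm _) (hB p).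
have hE : has_sup E.
  split; last by exists B => r Er; apply: EB.
  exists (- B); rewrite /E; apply: filterS' (filterT' UF) => // p _ /=.
  by rewrite lerNl; apply: le_trans (hB p); rewrite -normrN ler_norm.
exists (sup E) => eps e0.
have [r Er hr] := sup_adherent e0 hE.
have he2 : 0 < eps / 2 by rewrite divr_gt0.
have nE : ~ E (sup E + eps / 2).
  move=> hh; have := sup_upper_bound hE hh; lra.
have [//|hC] := ultra_dec [set p | sup E + eps / 2 <= h p] UU.
apply: filterS' (filterI' UF Er hC) => // p [/= p1 p2].
have p3 : h p < sup E + eps / 2 by rewrite ltNge; apply/negP => hh; apply: p2.
rewrite /= ltr_norml; apply/andP; split; lra.
Qed.

Lemma clim_ge {R : realType} {T : Type} (U : set (set T)) (h : T -> R) L c :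
  is_filter U -> clim U h L -> (forall p, c <= h p) -> c <= L.
Proof.
move=> UF hL hc; rewrite leNgt; apply/negP => Lc.
have cL : 0 < c - L by rewrite subr_gt0.
have [p hp] := filter_ne UF (hL (c - L) cL).
have := hc p; move: hp; rewrite /= ltr_norml => /andP [h1 h2]; lra.
Qed.

Lemma clim_le {R : realType} {T : Type} (U : set (set T)) (h : T -> R) L c :
  is_filter U -> clim U h L -> (forall p, h p <= c) -> L <= c.
Proof.
move=> UF hL hc; rewrite leNgt; apply/negP => Lc.
have cL : 0 < L - c by rewrite subr_gt0.
have [p hp] := filter_ne UF (hL (L - c) cL).
have := hc p; move: hp; rewrite /= ltr_norml => /andP [h1 h2]; lra.
Qed.

Lemma dot_sph {R : realType} {k : nat} (x : sphere R k) : dot (sval x) (sval x) = 1.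
Proof.
have h := svalP x; rewrite /= in h; rewrite -[RHS]h.
by apply: eq_bigr => i _; rewrite expr2.
Qed.

Lemma sph_coord_le1 {R : realType} {k : nat} (x : sphere R k) i : `|sval x i| <= 1.
Proof.
have h := sq_le_sum (sval x) i; rewrite (svalP x) in h.
have [x0|x0] := leP 0 (sval x i); first by rewrite ger0_norm //; nra.
by rewrite ltr0_norm //; nra.
Qed.

Lemma cyl_compact {R : realType} {m : nat} (U : set (set (sphere R m * unit_interval R))) :
  is_ultra U -> exists p, cyl_conv R m U p.
Proof.
move=> UU; have UF := ultra_filter UU.
have hx : forall i, exists L, clim U (fun z => sval z.1 i) L.
  by move=> i; apply: (ultra_lim (B := 1)) => // z; apply: sph_coord_le1.
have [Lx hLx] := choice hx.
have [Lt hLt] : exists L, clim U (fun z : sphere R m * unit_interval R => sval z.2) L.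
  apply: (ultra_lim (B := 1)) => // z; have /andP [z0 z1] := svalP z.2.
  by rewrite ger0_norm.
have hsum : \sum_(i < m.+1) Lx i ^+ 2 = 1.
  have h1 := climS UF (index_enum 'I_m.+1) (fun i => climX UF 2 (hLx i)).
  have h2 : clim U (fun z : sphere R m * unit_interval R => \sum_(i < m.+1) sval z.1 i ^+ 2) 1.
    have -> : (fun z : sphere R m * unit_interval R => \sum_(i < m.+1) sval z.1 i ^+ 2) = fun _ => 1.
      by apply: funext => z; exact: (svalP z.1).
    exact: climC.
  exact: (clim_unique UF h1 h2).
have ht : 0 <= Lt <= 1.
  apply/andP; split.
    by apply: (clim_ge UF hLt) => z; have /andP [] := svalP z.2.
  by apply: (clim_le UF hLt) => z; have /andP [] := svalP z.2.
exists (exist _ Lx hsum, exist _ Lt ht); exact: cyl_conv_of.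
Qed.


Lemma alpha_eq0 {R : realType} {m : nat} (e : 'I_m.+1 -> R) (w : 'I_m.+2 -> R) :
  dot e e = 1 -> \sum_(j < m.+2) w j ^+ 2 = 1 -> alpha e w = 0 -> forall j, w j = Pc e j.
Proof.
move=> he hw ha.
pose wy := fun i => w (lft i); pose wl := w ord_max.
have hsum : dot wy wy + wl ^+ 2 = 1.
  rewrite -hw sum_split; congr (_ + _); apply: eq_bigr => i _; by rewrite expr2.
have hwe : dot wy e = 1 - alpha e w by rewrite /alpha /dot; ring.
have hS : \sum_(i < m.+1) (wy i - e i) ^+ 2 + wl ^+ 2 = 0.
  by rewrite sum_sqB hwe he ha; lra.
have S0 : 0 <= \sum_(i < m.+1) (wy i - e i) ^+ 2 by apply: sumr_ge0 => i _; apply: sqr_ge0.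
have l0 := sqr_ge0 wl.
have h1 : \sum_(i < m.+1) (wy i - e i) ^+ 2 = 0 by lra.
have h2 : wl ^+ 2 = 0 by lra.
apply: split_ext => [i|]; rewrite ?Pc_lft ?Pc_max.
  by have := sum_sq_eq0 h1 i; move/eqP; rewrite subr_eq0 => /eqP.
by move: h2 => /eqP; rewrite sqrf_eq0 => /eqP.
Qed.

Section Main.
Variables (R : realType) (m : nat) (pt : sphere R m).

Let e := sval pt.
Let he : dot e e = 1 := dot_sph pt.

Lemma ui0_pf : (0 : R) <= 0 <= (1 : R).
Proof. by rewrite lexx ler01. Qed.
Definition ui0 : unit_interval R := exist _ 0 ui0_pf.
Definition suspf (z : sphere R m * unit_interval R) : sphere R m.+1 :=
  exist _ (Phi e (sval z.1) (sval z.2)) (Phi_sphere he (sval z.2) (dot_sph z.1)).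

Definition box (z : sphere R m * unit_interval R) (d : R) :=
  [set y : sphere R m * unit_interval R |
    (forall i, `|sval y.1 i - sval z.1 i| < d) /\ `|sval y.2 - sval z.2| < d].

Definition Nb z := [set A | exists2 d : R, 0 < d & box z d `<=` A].

Lemma Nb_filter z : is_filter (Nb z).
Proof.
split; first by exists 1.
split.
  by move=> [d d0 sb]; apply: (sb z); split => [i|]; rewrite subrr normr0.
split.
  move=> A B [d1 d10 s1] [d2 d20 s2]; exists (Num.min d1 d2); first by rewrite lt_min d10.
  move=> y [h1 h2]; split.
    apply: s1; split => [i|]; [have := h1 i|move: h2]; rewrite lt_min => /andP [].
      by [].
    by [].
  apply: s2; split => [i|]; [have := h1 i|move: h2]; rewrite lt_min => /andP [].
    by [].
  by [].
by move=> A B AB [d d0 sb]; exists d => //; apply: subset_trans AB.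
Qed.

Lemma Nb_conv z : cyl_conv R m (Nb z) z.
Proof.
apply: cyl_conv_of; first exact: Nb_filter.
  by move=> i d d0; exists d => // y [h _]; apply: h.
by move=> d d0; exists d => // y [_ h].
Qed.

Lemma sph_dist0 {k : nat} (y : sphere R k) : sph_dist y y = 0.
Proof.
rewrite /sph_dist (eq_bigr (fun _ => 0)) => [|i _]; last by rewrite subrr expr0n.
by rewrite big1 // sqrtr0.
Qed.

Lemma coordbox_open {k : nat} (c : 'I_k.+1 -> R) (d : R) :
  sphere_open R k [set y | forall i, `|sval y i - c i| < d].
Proof.
move=> y hy.
pose Bf := [set A : set (sphere R k) | exists2 r : R, 0 < r & [set y' | sph_dist y y' < r] `<=` A].
have BF : is_filter Bf.
  split; first by exists 1.
  split; first by move=> [r r0 sb]; apply: (sb y); rewrite /= sph_dist0.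
  split.
    move=> A B [d1 d10 s1] [d2 d20 s2]; exists (Num.min d1 d2); first by rewrite lt_min d10.
    by move=> y' /=; rewrite lt_min => /andP [h1 h2]; split; [apply: s1|apply: s2].
  by move=> A B AB [r r0 sb]; exists r => //; apply: subset_trans AB.
have := ffilter_all (P := fun i => [set y' : sphere R k | `|sval y' i - c i| < d]) BF.
case.
  move=> i; exists (d - `|sval y i - c i|); first by rewrite subr_gt0.
  move=> y' /= dy.
  have := coord_le_dist y y' i; have := ler_normD (sval y' i - sval y i) (sval y i - c i).
  have -> : sval y' i - sval y i + (sval y i - c i) = sval y' i - c i by ring.
  by have := distrC (sval y' i) (sval y i); lra.
by move=> r r0 sb; exists r.
Qed.

Lemma ball_open (c d : R) : Defs.interval_open R [set s | `|sval s - c| < d].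
Proof.
move=> z /= hz; exists (d - `|sval z - c|); first by rewrite subr_gt0.
move=> y dy /=.
have := ler_normD (sval y - sval z) (sval z - c).
have -> : sval y - sval z + (sval z - c) = sval y - c by ring.
by rewrite distrC in dy; lra.
Qed.

Lemma box_cyl_open (A : set (sphere R m * unit_interval R)) :
  (forall z, A z -> exists2 d : R, 0 < d & box z d `<=` A) -> cyl_open R m A.
Proof.
move=> h z Az; have [d d0 sb] := h z Az.
exists [set y | forall i, `|sval y i - sval z.1 i| < d].
exists [set s | `|sval s - sval z.2| < d].
split; [exact: coordbox_open|exact: ball_open| | |].
- by move=> i; rewrite subrr normr0.
- by rewrite /= subrr normr0.
by move=> [y s] [h1 h2]; apply: sb; split.
Qed.

Lemma f_conv (W : set (set (sphere R m * unit_interval R))) z :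
  is_filter W -> cyl_conv R m W z ->
  top_conv (sphere_open R m.+1) (fimage suspf W) (suspf z).
Proof.
move=> WF hz; have [h1 h2] := cyl_conv_to WF hz.
apply: sphere_conv_of; first exact: fimage_filter.
move=> j eps e0; apply/fimage_pre => //.
have := Phi_cont he (X := fun y : sphere R m * unit_interval R => sval y.1)
   (Tt := fun y : sphere R m * unit_interval R => sval y.2) WF
   (fun p => dot_sph p.1) (dot_sph z.1) h1 h2 j e0.
by [].
Qed.

Lemma f_open V : sphere_open R m.+1 V -> cyl_open R m (suspf @^-1` V).
Proof.
move=> oV; apply: box_cyl_open => z Vz.
have := f_conv (Nb_filter z) (Nb_conv z) oV Vz.
by move/(fimage_pre _ _ (Nb_filter z)).
Qed.

Lemma P_Pc j : sval (suspf (pt, ui0)) j = Pc e j.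
Proof. by apply: (Phi_coll he (dot_sph pt)); right; right. Qed.

Lemma suspf_coll z : susp_collapsed pt z -> suspf z = suspf (pt, ui0).
Proof.
move=> hz; apply: sphere_ext => j; rewrite P_Pc /=.
apply: (Phi_coll he (dot_sph z.1)).
by case: hz => [h|[h|h]]; [left|right; left|right; right; rewrite h].
Qed.

Lemma ncoll_facts z : ~ susp_collapsed pt z -> 0 < sval z.2 < 1 /\ 0 < aF e (sval z.1).
Proof.
move=> nc; split.
  have /andP [t0 t1] := svalP z.2.
  rewrite !lt_neqAle t0 t1 !andbT; apply/andP; split; apply/eqP => h; apply: nc.
    by left.
  by right; left.
rewrite lt_neqAle aF_ge0 ?dot_sph // andbT; apply/eqP => h; apply: nc; right; right.
by apply: sphere_ext => i; rewrite (aF_eq0 he (dot_sph z.1) (esym h)).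
Qed.

Lemma suspf_ncoll z : ~ susp_collapsed pt z -> suspf z <> suspf (pt, ui0).
Proof.
move=> nc h; have [ht ha] := ncoll_facts nc.
have := alpha_Phi he (sval z.1) (sval z.2).
have -> : Phi e (sval z.1) (sval z.2) = Pc e.
  by apply: funext => j; rewrite -P_Pc -h.
rewrite alpha_Pc // => h0.
have := mulr_gt0 (kF_gt0 he (dot_sph z.1) ht) ha; rewrite -h0 ltxx.
by [].
Qed.

Lemma suspf_inj z1 z2 : ~ susp_collapsed pt z1 -> ~ susp_collapsed pt z2 ->
  suspf z1 = suspf z2 -> z1 = z2.
Proof.
move=> n1 n2 h; have [t1 a1] := ncoll_facts n1; have [t2 a2] := ncoll_facts n2.
have [hx ht] := Phi_inj he (dot_sph z1.1) (dot_sph z2.1) t1 t2 a1 a2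
  (fun j => congr1 (fun w : sphere R m.+1 => sval w j) h).
move: z1 z2 {n1 n2 h t1 t2 a1 a2} hx ht => [x1 s1] [x2 s2] /= hx ht.
by rewrite (sphere_ext hx) (ui_ext ht).
Qed.

Lemma suspf_ker a b : suspf a = suspf b <-> susp_rel pt a b.
Proof.
split; last by case=> [->|[ca cb]] //; rewrite !suspf_coll.
move=> h; case: (pselect (susp_collapsed pt a)) => ca.
  right; split => //; case: (pselect (susp_collapsed pt b)) => // nb.
  by exfalso; apply: (suspf_ncoll nb); rewrite -h suspf_coll.
case: (pselect (susp_collapsed pt b)) => cb.
  by exfalso; apply: (suspf_ncoll ca); rewrite h suspf_coll.
by left; apply: suspf_inj.
Qed.

Lemma suspf_surj w : exists z, suspf z = w.
Proof.
have hw : \sum_(j < m.+2) sval w j ^+ 2 = 1 by exact: (svalP w).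
case: (eqVneq (alpha e (sval w)) 0) => ha.
  exists (pt, ui0); apply: sphere_ext => j.
  by rewrite P_Pc (alpha_eq0 he hw ha j).
have [x [t [hx ht ha' hP]]] := Phi_surj he hw ha.
have hxs : \sum_(i < m.+1) x i ^+ 2 = 1.
  by rewrite -hx; apply: eq_bigr => i _; rewrite expr2.
have ht' : 0 <= t <= 1 by move: ht => /andP [h1 h2]; rewrite !ltW.
by exists (exist _ x hxs, exist _ t ht'); apply: sphere_ext => j; apply: hP.
Qed.
End Main.


Lemma main_m (R : realType) (m : nat) (pt : sphere R m) (Q : Type)
  (q : sphere R m * unit_interval R -> Q)
  (q_surj : forall y : Q, exists a, q a = y)
  (q_ker : forall a b, q a = q b <-> susp_rel pt a b) :
  (forall (F : set (set Q)) (y : Q), is_filter F ->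
     (final_pstop (cyl_conv R m) q F y <->
      top_conv (quot_open (cyl_open R m) q) F y)) /\
  conv_homeomorphic (final_pstop (cyl_conv R m) q)
                    (top_conv (sphere_open R m.+1)).
Proof.
pose qc := top_conv (quot_open (cyl_open R m) q).
pose pick y := projT1 (cid (q_surj y)).
have pickK y : q (pick y) = y by rewrite /pick; case: (cid _).
pose g y := suspf pt (pick y).
have gq a : g (q a) = suspf pt a by apply/suspf_ker; apply/q_ker; rewrite pickK.
have qcont : conv_continuous (cyl_conv R m) qc q.
  by move=> F x FF hF; apply: quot_cont; apply: prod_to_top.
have g_cont G y : is_filter G -> qc G y -> top_conv (sphere_open R m.+1) (fimage g G) (g y).
  move=> GF hG V oV Vy; exists (g @^-1` V); last by move=> _ [z ? <-].
  apply: hG => //; rewrite /quot_open.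
  have -> : q @^-1` (g @^-1` V) = suspf pt @^-1` V.
    by apply/seteqP; split => a /=; rewrite gq.
  exact: f_open.
have qc_unique G y1 y2 : is_filter G -> qc G y1 -> qc G y2 -> y1 = y2.
  move=> GF h1 h2.
  have := sphere_hausdorff (fimage_filter g GF) (g_cont _ _ GF h1) (g_cont _ _ GF h2).
  by move/suspf_ker/q_ker; rewrite !pickK.
have part1 : forall (F : set (set Q)) (y : Q), is_filter F ->
     (final_pstop (cyl_conv R m) q F y <-> qc F y).
  move=> F y FF; split; first by move=> h; apply: h; [apply: top_pseudotop|].
  move=> hq c hc hcont; apply: ((hc.2 F y FF).2) => U UU FU.
  have [W [WU WUe]] := lift_ultra q_surj UU.
  have [p hp] := cyl_compact WU.
  have := hcont W p (ultra_filter WU) hp; rewrite WUe.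
  have -> // : y = q p.
  apply: (qc_unique U) => //; first exact: ultra_filter.
    by move=> O oO Oy; apply: FU; apply: hq.
  by rewrite -WUe; apply: qcont => //; exact: ultra_filter.
split => //.
pose h w := q (projT1 (cid (suspf_surj pt w))).
have hK w : g (h w) = w by rewrite /h gq; case: (cid _).
have gK : cancel g h.
  have ginj : injective g by move=> y1 y2 /suspf_ker /q_ker; rewrite !pickK.
  by move=> y; apply: ginj; rewrite hK.
exists g, h; split => //; split => //; split.
  by move=> F y FF /(part1 _ _ FF); apply: g_cont.
move=> F w FF hF; apply/part1; first exact: fimage_filter.
apply: ((top_pseudotop _).2 _ _ (fimage_filter h FF)).2 => U UU FU.
have UF := ultra_filter UU.
have [W [WU WUe]] := lift_ultra q_surj UU.
have [p hp] := cyl_compact WU.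
have qp : qc U (q p) by rewrite -WUe; apply: qcont => //; exact: ultra_filter.
suff -> : h w = q p by [].
have gp : g (q p) = w.
  apply: (sphere_hausdorff (fimage_filter g UF) (g_cont _ _ UF qp)).
  move=> V oV Vw; exists (g @^-1` V); last by move=> _ [z ? <-].
  apply: FU; exists V; first exact: hF.
  by move=> _ [x Vx <-]; rewrite /= hK.
by rewrite -gp gK.
Qed.

Theorem mainTheorem6 (R : realType) (n : nat) (hn : (1 <= n)%N)
  (pt : sphere R n.-1) (Q : Type) (q : sphere R n.-1 * unit_interval R -> Q)
  (q_surj : forall y : Q, exists a, q a = y)
  (q_ker : forall a b, q a = q b <-> susp_rel pt a b) :
  (forall (F : set (set Q)) (y : Q), is_filter F ->
     (final_pstop (cyl_conv R n.-1) q F y <->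
      top_conv (quot_open (cyl_open R n.-1) q) F y)) /\
  conv_homeomorphic (final_pstop (cyl_conv R n.-1) q)
                    (top_conv (sphere_open R n)).
Proof.
case: n hn pt q q_surj q_ker => [//|m] _ pt q q_surj q_ker.
exact: main_m.
Qed.
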